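(* Let $G=(V,E,w_G)$ be a directed graph with non-negative integer edge weights, $n=|V|$, $s\in V$, and $1\le h\le n$ an integer. Let $C\subseteq V$ contain $s$ and, for every pair of nodes $u,v$ for which the shortest path from $u$ to $v$ in $G$ consists of exactly $\lceil h/2\rceil$ nodes, at least one node of one of these shortest paths. For each $x\in C$ let $\tilde d(x,\cdot)$ satisfy $\mathrm{dist}_G(x,v)\le \tilde d(x,v)\le 2\,\mathrm{dist}^h_G(x,v)$ for all $v\in V$. Let $H=(C,C^2,w_H)$ with $w_H(x,y)=\tilde d(x,y)$. Let $G'=(V,E\cup(\{s\}\times C),w_{G'})$ where $w_{G'}(u,v)=\mathrm{dist}_H(u,v)$ for $(u,v)\in(\{s\}\times C)\setminus E$, $w_{G'}(u,v)=2w_G(u,v)$ for $(u,v)\in E\setminus(\{s\}\times C)$, and $w_{G'}(u,v)=\min(\mathrm{dist}_H(u,v),2w_G(u,v))$ for $(u,v)\in E\cap(\{s\}\times C)$. Then for every node $v\in V$, $\mathrm{dist}_G(s,v)\le \mathrm{dist}_{G'}(s,v)\le 2\,\mathrm{dist}_G(s,v)$.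
   Context: For a weighted directed graph, $\mathrm{dist}(u,v)$ denotes the minimum weight of a directed path from $u$ to $v$. For an integer $h\ge1$, the $h$-hop distance $\mathrm{dist}^h(u,v)$ is the minimum weight among all directed paths from $u$ to $v$ with at most $h$ edges. *)

(* Defs.v *)
From mathcomp Require Import all_boot.
From mathcomp Require Import boolp.

Set Implicit Arguments.
Unset Strict Implicit.
Unset Printing Implicit Defensive.

(* Extended naturals N ∪ {+oo}: [Some k] is k, [None] is +oo. *)
Definition oleq (a b : option nat) : bool :=
  match b with
  | None => true
  | Some b' => match a with Some a' => (a' <= b')%N | None => false end
  end.

Definition odbl (a : option nat) : option nat := omap (fun k => 2 * k)%N a.

Definition omin (a b : option nat) : option nat :=
  match a, b with
  | None, _ => b
  | _, None => a
  | Some x, Some y => Some (minn x y)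
  end.

Lemma oinf_ex (Q : nat -> Prop) : (exists k, Q k) -> exists k, `[< Q k >].
Proof. by case=> k Hk; exists k; apply/asboolP. Qed.

Definition oinf (Q : nat -> Prop) : option nat :=
  match pselect (exists k, Q k) with
  | left H => Some (ex_minn (oinf_ex H))
  | right _ => None
  end.

Section Graphs.
Variable T : finType.

(* A weighted directed graph on T: [w u v = Some c] means the edge (u,v)
   is present with weight c; [w u v = None] means there is no edge
   (equivalently, an edge of weight +oo). *)
Definition wgraph := T -> T -> option nat.

(* Weight of the walk u :: p (its edges are consecutive pairs);
   None if some consecutive pair is not an edge. *)
Fixpoint wwt (w : wgraph) (u : T) (p : seq T) : option nat :=
  match p with
  | [::] => Some 0
  | v :: p' => obind (fun a => omap (addn a) (wwt w v p')) (w u v)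
  end.

Definition dist (w : wgraph) (u v : T) : option nat :=
  oinf (fun k => exists p : seq T, last u p = v /\ wwt w u p = Some k).

Definition hdist (w : wgraph) (h : nat) (u v : T) : option nat :=
  oinf (fun k => exists p : seq T,
          (size p <= h)%N /\ last u p = v /\ wwt w u p = Some k).

Definition shortest_path (w : wgraph) (u v : T) (p : seq T) : Prop :=
  uniq (u :: p) /\ last u p = v /\
  exists k, wwt w u p = Some k /\ dist w u v = Some k.

End Graphs.

Definition graph_of (T : finType) (E : rel T) (wG : T -> T -> nat) : wgraph T :=
  fun u v => if E u v then Some (wG u v) else None.

(* H = (C, C^2, w_H) with w_H(x,y) = dt x y, represented on the vertex type
   T with all edges touching a vertex outside C removed. *)
Definition graph_H (T : finType) (C : {set T}) (dt : T -> T -> option nat)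
  : wgraph T :=
  fun x y => if (x \in C) && (y \in C) then dt x y else None.

Definition graph_G' (T : finType) (E : rel T) (wG : T -> T -> nat)
  (C : {set T}) (dt : T -> T -> option nat) (s : T) : wgraph T :=
  fun u v =>
    if (u == s) && (v \in C) then
      (if E u v then omin (dist (graph_H C dt) u v) (Some (2 * wG u v)%N)
       else dist (graph_H C dt) u v)
    else if E u v then Some (2 * wG u v)%N else None.

(* Main.v *)
Require Import Defs.
From mathcomp Require Import all_boot.
From mathcomp Require Import boolp.
Set Implicit Arguments.
Unset Strict Implicit.

Section Aux.
Variable T : finType.
Implicit Types (w : wgraph T).

Definition reach w (u v : T) (k : nat) : Prop :=
  exists p, last u p = v /\ exists k', wwt w u p = Some k' /\ (k' <= k)%N.

Lemma dist_le w u v k : reach w u v k -> oleq (dist w u v) (Some k).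
Proof.
case=> p [Hl [k' [Hw Hk]]]; rewrite /dist /oinf.
case: pselect => [H|H]; last by exfalso; apply: H; exists k', p.
case: ex_minnP => m _ Hmin /=.
apply: leq_trans Hk; apply: Hmin; apply/asboolP; by exists p.
Qed.

Lemma dist_some w u v k : dist w u v = Some k -> reach w u v k.
Proof.
rewrite /dist /oinf; case: pselect => [H|H] //.
case: ex_minnP => m /asboolP [p [Hl Hw]] _ [<-].
by exists p; split => //; exists m.
Qed.

Lemma reach_mono w u v a b : (a <= b)%N -> reach w u v a -> reach w u v b.
Proof.
move=> Hab [p [Hl [k' [Hw Hk]]]]; exists p; split => //; exists k'; split => //.
exact: leq_trans Hab.
Qed.

Lemma wwt_cat w u p q a b : wwt w u p = Some a -> wwt w (last u p) q = Some b ->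
  wwt w u (p ++ q) = Some (a + b).
Proof.
elim: p u a => [|x p IH] u a /=; first by case=> <-.
case Hux: (w u x) => [c|] //=.
case Hp: (wwt w x p) => [d|] //= [<-] Hq.
by rewrite (IH x d Hp Hq) /= addnA.
Qed.

Lemma reach_cat w u x v a b : reach w u x a -> reach w x v b -> reach w u v (a + b).
Proof.
move=> [p [Hl [k [Hw Hk]]]] [q [Hl' [k' [Hw' Hk']]]].
exists (p ++ q); split; first by rewrite last_cat Hl.
exists (k + k'); split; last exact: leq_add.
apply: wwt_cat Hw _; by rewrite Hl.
Qed.

Lemma reach_sim w w' :
  (forall x y c, w' x y = Some c -> reach w x y c) ->
  forall u v k, reach w' u v k -> reach w u v k.
Proof.
move=> Hs u v k [p [Hl [k' [Hw Hk]]]]; apply: (reach_mono Hk); rewrite -Hl.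
elim: p u k' Hw {Hl Hk} => [|x p IH] u k' /=.
  by case=> <-; exists [::]; split => //; exists 0.
case Hux: (w' u x) => [c|] //=.
case Hp: (wwt w' x p) => [d|] //= [<-].
exact: (reach_cat (Hs _ _ _ Hux) (IH _ _ Hp)).
Qed.

Lemma reach_dbl w w' :
  (forall x y c, w x y = Some c -> exists c', w' x y = Some c' /\ (c' <= 2 * c)%N) ->
  forall u v k, reach w u v k -> reach w' u v (2 * k).
Proof.
move=> Hs u v k [p [Hl [k' [Hw Hk]]]].
have Hk2 : (2 * k' <= 2 * k)%N by rewrite leq_mul2l.
apply: (reach_mono Hk2); exists p; split => //.
elim: p u k' Hw {Hl Hk Hk2} => [|x p IH] u k' /=.
  by case=> <-; exists 0.
case Hux: (w u x) => [c|] //=.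
case Hp: (wwt w x p) => [d|] //= [<-].
have [c' [-> Hc]] := Hs _ _ _ Hux.
have [d' [-> Hd]] := IH _ _ Hp.
exists (c' + d'); split => //; rewrite mulnDr; exact: leq_add.
Qed.

End Aux.

Theorem lemma3p2 (V : finType) (E : rel V) (wG : V -> V -> nat) (s : V)
  (h : nat) (C : {set V}) (dt : V -> V -> option nat) :
  (0 < h)%N -> (h <= #|V|)%N ->
  s \in C ->
  (* hitting property: whenever the shortest paths from u to v have (at
     minimum) exactly ceil(h/2) nodes, C contains a node of one of them *)
  (forall u v : V,
     (exists p, shortest_path (graph_of E wG) u v p /\ (size p).+1 = uphalf h) ->
     (forall p, shortest_path (graph_of E wG) u v p -> (uphalf h <= (size p).+1)%N) ->
     exists p x, [/\ shortest_path (graph_of E wG) u v p, (size p).+1 = uphalf h,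
                     x \in u :: p & x \in C]) ->
  (forall x, x \in C -> forall v : V,
     oleq (dist (graph_of E wG) x v) (dt x v) /\
     oleq (dt x v) (odbl (hdist (graph_of E wG) h x v))) ->
  forall v : V,
    oleq (dist (graph_of E wG) s v) (dist (graph_G' E wG C dt s) s v) /\
    oleq (dist (graph_G' E wG C dt s) s v) (odbl (dist (graph_of E wG) s v)).
Proof.
move=> _ _ _ _ Hdt v.
set G := graph_of E wG.
have Gedge : forall x y, E x y -> reach G x y (wG x y).
  move=> x y Exy; exists [:: y]; split => //; exists (wG x y + 0).
  by rewrite /= /G /graph_of Exy /= addn0.
have HH : forall x y c, graph_H C dt x y = Some c -> reach G x y c.
  move=> x y c; rewrite /graph_H; case: andP => // [[Hx _]] Hc.
  have [H1 _] := Hdt x Hx y; rewrite Hc in H1.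
  case Hd: (dist G x y) H1 => [m|] //= Hm.
  exact: (reach_mono Hm (dist_some Hd)).
have HG' : forall x y c, graph_G' E wG C dt s x y = Some c -> reach G x y c.
  move=> x y c; rewrite /graph_G'.
  case: andP => _.
    case Exy: (E x y).
      case Hd: (dist (graph_H C dt) x y) => [d|] /=.
        case=> <-; case: (leqP d (2 * wG x y)) => Hl.
          exact: reach_sim HH _ _ _ (dist_some Hd).
         apply: (reach_mono _ (Gedge _ _ Exy)).
        by rewrite leq_pmull.
      case=> <-; apply: (reach_mono _ (Gedge _ _ Exy)); by rewrite leq_pmull.
    move=> Hd; exact: reach_sim HH _ _ _ (dist_some Hd).
  case Exy: (E x y) => //; case=> <-.
  apply: (reach_mono _ (Gedge _ _ Exy)); by rewrite leq_pmull.
split.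
  case Hd: (dist (graph_G' E wG C dt s) s v) => [m|] //.
  apply: dist_le; exact: reach_sim HG' _ _ _ (dist_some Hd).
case Hd: (dist G s v) => [m|] /=; last by case: (dist _ s v).
apply: dist_le; apply: reach_dbl (dist_some Hd).
move=> x y c; rewrite /G /graph_of; case Exy: (E x y) => //; case=> <-.
rewrite /graph_G' Exy; case: andP => _; last by exists (2 * wG x y).
case: (dist (graph_H C dt) x y) => [d|] /=; last by exists (2 * wG x y).
by exists (minn d (2 * wG x y)); rewrite geq_minr.
Qed.
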